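(* Let $h$ and $k$ be positive integers. If $A$ is a set of $k$ nonnegative integers with $\ell_h(A)=n_h(k)$, then $\operatorname{diam}(A)\le n_h(k)$.
   Context: $[0,n]=\{0,1,\ldots,n\}$. $hA=\{a_1+\cdots+a_h: a_i\in A\}$ (summands not necessarily distinct). For a nonempty finite $A\subseteq\mathbf{N}_0=\{0,1,2,\ldots\}$ with $0\in A$, $\ell_h(A)$ is the largest integer $n\ge0$ with $[0,n]\subseteq hA$ (undefined if $0\notin A$). $n_h(k)=\max\{\ell_h(A): A\subseteq\mathbf{N}_0, |A|=k\}$ (over sets where $\ell_h$ is defined). $\operatorname{diam}(A)=\sup\{|a-a'|: a,a'\in A\}$. *)

(* Defs.v *)
From mathcomp Require Import all_boot all_order.
From mathcomp Require Import finmap.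
Set Implicit Arguments. Unset Strict Implicit. Unset Printing Implicit Defensive.
Local Open Scope fset_scope.

Definition in_sumset (h : nat) (A : {fset nat}) (m : nat) : Prop :=
  exists s : seq nat, [/\ size s = h, all (fun a => a \in A) s & sumn s = m].

Definition interval_in_sumset (h : nat) (A : {fset nat}) (n : nat) : Prop :=
  forall m, m <= n -> in_sumset h A m.

(* is_ell h A n : n = l_h(A), the largest n >= 0 with [0,n] in hA
   (only meaningful when 0 \in A). *)
Definition is_ell (h : nat) (A : {fset nat}) (n : nat) : Prop :=
  0 \in A /\ interval_in_sumset h A n /\
  (forall n', interval_in_sumset h A n' -> n' <= n).

Definition is_nh (h k : nat) (N : nat) : Prop :=
  (exists B : {fset nat}, #|` B| = k /\ is_ell h B N) /\
  (forall (B : {fset nat}) (l : nat), #|` B| = k -> is_ell h B l -> l <= N).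

(* diam A = sup { |a - a'| : a, a' in A } (truncated subtraction suffices). *)
Definition diam (A : {fset nat}) : nat :=
  \max_(a <- A) \max_(b <- A) (a - b).

(* Main.v *)
Require Import Defs.
From mathcomp Require Import all_boot all_order.
From mathcomp Require Import finmap.
From Stdlib Require Import Classical.
From mathcomp Require Import zify.
Local Open Scope fset_scope.

Lemma mem_le_sumn (s : seq nat) x : x \in s -> x <= sumn s.
Proof.
elim: s => //= y s IH; rewrite inE => /orP [/eqP -> | /IH H].
  exact: leq_addr.
by apply: (leq_trans H); exact: leq_addl.
Qed.

Lemma sumn_le_bound (s : seq nat) M : all (fun x => x <= M) s -> sumn s <= size s * M.
Proof.
elim: s => //= y s IH /andP [Hy Hs].
by rewrite mulSn leq_add // IH.
Qed.

Lemma max_exists (P : nat -> Prop) B : forall d n0, B - n0 <= d -> P n0 ->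
  (forall n, P n -> n <= B) -> exists l, P l /\ forall n, P n -> n <= l.
Proof.
elim=> [|d IH] n0 Hd Pn0 HB.
  exists n0; split=> // n Pn; apply: (leq_trans (HB n Pn)).
  by rewrite -subn_eq0 -leqn0.
destruct (classic (exists n, P n /\ n0 < n)) as [[n [Pn Hn]]|Hno].
  apply: (IH n) => //.
  have := HB n Pn; have := HB n0 Pn0. lia.
exists n0; split=> // n Pn.
rewrite leqNgt; apply/negP => Hlt; apply: Hno; by exists n.
Qed.

Theorem mainTheorem7 (h k : nat) (A : {fset nat}) (N : nat) :
  0 < h -> 0 < k -> #|` A| = k ->
  is_nh h k N -> is_ell h A N ->
  diam A <= N.
Proof.
move=> hpos kpos cardA [_ Hmax] [A0 [HintA HmaxA]].
suff allN : forall a, a \in A -> a <= N.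
  apply/bigmax_leqP_seq => a aA _; apply/bigmax_leqP_seq => b bA _.
  exact: leq_trans (leq_subr _ _) (allN a aA).
move=> a aA; rewrite leqNgt; apply/negP => Na.
have sN1 : forall B : {fset nat}, 0 \in B -> N.+1 \in B -> in_sumset h B N.+1.
  move=> B B0 BN; exists (N.+1 :: nseq h.-1 0); split.
  - by rewrite /= size_nseq prednK.
  - rewrite /= BN /=; apply/allP => x /nseqP [-> _]; exact: B0.
  - by rewrite /= sumn_nseq mul0n addn0.
have N1A : N.+1 \notin A.
  apply/negP => N1A.
  have : N.+1 <= N; last by rewrite ltnn.
  apply: HmaxA => m; rewrite leq_eqVlt => /orP [/eqP -> | Hm].
    exact: sN1.
  exact: HintA.
set A' := N.+1 |` (A `\ a).
have cardA' : #|` A'| = k.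
  rewrite cardfsU1 in_fsetD1 (negbTE N1A) andbF /= -cardA (cardfsD1 a A) aA.
  by [].
have A'0 : 0 \in A'.
  by rewrite !inE A0 andbT; apply/orP; right; apply/eqP => e; rewrite -e in Na.
have A'N : N.+1 \in A' by rewrite !inE eqxx.
have Hint' : interval_in_sumset h A' N.+1.
  move=> m; rewrite leq_eqVlt => /orP [/eqP -> | Hm]; first exact: sN1.
  have [s [Hs1 Hs2 Hs3]] := HintA m Hm.
  exists s; split=> //; apply/allP => x xs.
  have xle : x <= m by rewrite -Hs3; exact: mem_le_sumn.
  rewrite !inE (allP Hs2 x xs) andbT; apply/orP; right.
  apply/eqP => xa; move: xle; rewrite xa; lia.
set M := \max_(x <- A') x.
have bnd : forall n, interval_in_sumset h A' n -> n <= h * M.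
  move=> n Hn; have [s [Hs1 Hs2 Hs3]] := Hn n (leqnn n).
  rewrite -Hs3 -Hs1; apply: sumn_le_bound.
  apply/allP => x xs; exact: (leq_bigmax_seq (F := id) x (allP Hs2 x xs) isT).
have [l [Hl Hlmax]] := @max_exists (interval_in_sumset h A') (h * M) _ N.+1 (leqnn (h * M - N.+1)) Hint' bnd.
have := Hmax A' l cardA' (conj A'0 (conj Hl Hlmax)).
have := Hlmax _ Hint'. lia.
Qed.
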